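(* Let $v_0=\epsilon$ (the empty word) and for $i>0$ let $v_i=\bigl(v_{i-1}0v_{i-1}1v_{i-1}1v_{i-1}0v_{i-1}2v_{i-1}2\bigr)^{(+)}$ over the alphabet $\{0,1,2\}$. Then for every $i$, the palindrome $v_i$ is rich.
   Context: For a finite word $w$, $w^{(+)}$ denotes the shortest palindrome having $w$ as a prefix. A finite word $w$ is rich if it contains exactly $|w|+1$ distinct palindromic factors (counting the empty word). *)

(* Defs.v *)
From mathcomp Require Import all_boot.
Set Implicit Arguments. Unset Strict Implicit. Unset Printing Implicit Defensive.

Definition letter := 'I_3.
Definition word := seq letter.
Definition l0 : letter := @Ordinal 3 0 isT.
Definition l1 : letter := @Ordinal 3 1 isT.
Definition l2 : letter := @Ordinal 3 2 isT.

Definition palindrome (w : word) : bool := rev w == w.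

(* p is the shortest palindrome having w as a prefix, i.e. p = w^(+). *)
Definition is_pal_closure (w p : word) : Prop :=
  [/\ palindrome p, prefix w p &
      forall q : word, palindrome q -> prefix w q -> size p <= size q].

Definition factors (w : word) : seq word :=
  undup [seq take j (drop i w) | i <- iota 0 (size w).+1, j <- iota 0 (size w).+1].

Definition pal_factors (w : word) : seq word := [seq u <- factors w | palindrome u].

Definition rich (w : word) : bool := size (pal_factors w) == (size w).+1.

Definition step_word (u : word) : word :=
  u ++ l0 :: u ++ l1 :: u ++ l1 :: u ++ l0 :: u ++ l2 :: u ++ [:: l2].

(* Main.v *)
Require Import Defs.
From mathcomp Require Import all_boot.
From Stdlib Require Import Lia.
From mathcomp Require Import zify.
Set Implicit Arguments. Unset Strict Implicit. Unset Printing Implicit Defensive.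

Lemma mem_factors u w : (u \in factors w) = infix u w.
Proof.
rewrite /factors mem_undup; apply/allpairsP/infixP.
  move=> [[i j] /= [_ _ ->]].
  exists (take i w), (drop j (drop i w)).
  by rewrite cat_take_drop cat_take_drop.
move=> [s [s' ->]]; exists (size s, size u) => /=; split.
- rewrite -[0 :: _]/(iota 0 (size (s ++ u ++ s')).+1) mem_iota !size_cat; move: (size s) (size u) (size s') => a b c; apply/andP; split; lia.
- rewrite -[0 :: _]/(iota 0 (size (s ++ u ++ s')).+1) mem_iota !size_cat; move: (size s) (size u) (size s') => a b c; apply/andP; split; lia.
- by rewrite drop_size_cat // take_size_cat.
Qed.

Lemma mem_pal u w : (u \in pal_factors w) = palindrome u && infix u w.
Proof. by rewrite mem_filter mem_factors. Qed.

Lemma uniq_pal w : uniq (pal_factors w).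
Proof. by rewrite filter_uniq // undup_uniq. Qed.

Ltac fix_sizes := repeat match goal with
 | |- context [@size ?T ?s] => lazymatch T with letter => fail | _ => change (@size T s) with (@size letter s) end
 | H : context [@size ?T ?s] |- _ => lazymatch T with letter => fail | _ => change (@size T s) with (@size letter s) in H end
 end.
Ltac slia := fix_sizes; lia.
Lemma catL_inj (s1 s2 t1 t2 : word) : size s1 = size s2 -> s1 ++ t1 = s2 ++ t2 -> s1 = s2 /\ t1 = t2.
Proof. by move=> Hs /eqP; rewrite eqseq_cat // => /andP[/eqP-> /eqP->]. Qed.

Lemma infix_rcons_suffix (p w : word) a :
  infix p (rcons w a) -> ~~ infix p w -> suffix p (rcons w a).
Proof.
move=> /infixP[s [s' E]] Hn; case/lastP: s' E => [|t b] E.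
  by rewrite E cats0; apply: suffix_suffix.
rewrite -rcons_cat -rcons_cat in E; case: (rcons_inj E) => Ew _.
by rewrite Ew catA in Hn; rewrite -catA infix_infix in Hn.
Qed.

Lemma suffix_suffix_size (p q r : word) :
  suffix p r -> suffix q r -> size p <= size q -> suffix p q.
Proof.
move=> /suffixP[r1 Er] /suffixP[r2 Eq] Hs; rewrite Eq in Er.
have Hsz : size r2 <= size r1 by move: (congr1 size Er); rewrite !size_cat; slia.
have E1 : r1 = r2 ++ drop (size r2) r1.
  have := congr1 (take (size r2)) Er.
  rewrite take_size_cat // take_cat.
  case: ltnP => H.
    by move=> E; rewrite {1}E cat_take_drop.
  have -> : size r2 = size r1 by apply/eqP; rewrite eqn_leq Hsz H.
  by rewrite subnn take0 cats0 drop_size cats0 => ->.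
rewrite E1 -catA in Er; case: (catL_inj (erefl _) Er) => _ ->.
exact: suffix_suffix.
Qed.

Lemma pal_new (w p q : word) a :
  palindrome p -> palindrome q -> infix p (rcons w a) -> infix q (rcons w a) ->
  ~~ infix p w -> ~~ infix q w -> p = q.
Proof.
have main : forall p q : word, palindrome p -> palindrome q -> infix p (rcons w a) -> infix q (rcons w a) ->
  ~~ infix p w -> ~~ infix q w -> size p <= size q -> p = q.
  move=> {}p {}q Pp Pq Ip Iq Np Nq Hs.
  have Sp := infix_rcons_suffix Ip Np; have Sq := infix_rcons_suffix Iq Nq.
  have /suffixP[t Et] := suffix_suffix_size Sp Sq Hs.
  case/lastP: t Et => [|t b] Et; first by rewrite Et.
  exfalso; move: Pq; rewrite /palindrome Et rev_cat rev_rcons.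
  move: Pp; rewrite /palindrome => /eqP -> /eqP Eq.
  case/suffixP: Sq => r2 Er.
  rewrite Et -Eq lastI -rcons_cat -rcons_cat in Er.
  case: (rcons_inj Er) => Ew _.
  by move: Np; rewrite Ew infix_infix.
move=> Pp Pq Ip Iq Np Nq; case: (leqP (size p) (size q)) => H.
  exact: main.
by symmetry; apply: main => //; apply: ltnW.
Qed.

Lemma size_le1 (s : seq word) : uniq s -> (forall x y, x \in s -> y \in s -> x = y) -> size s <= 1.
Proof.
case: s => [|x [|y s]] //= /andP[Hx _] H.
by move: Hx; rewrite (H x y) ?inE ?eqxx ?orbT // inE eqxx.
Qed.

Lemma pal_rcons (w : word) a : size (pal_factors (rcons w a)) <= (size (pal_factors w)).+1.
Proof.
set A := pal_factors (rcons w a); set B := pal_factors w.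
rewrite -(count_predC (mem B) A) -!size_filter.
have -> : (size B).+1 = size B + 1 by rewrite addn1.
apply: leq_add.
  apply: uniq_leq_size; first by rewrite filter_uniq // uniq_pal.
  by move=> x; rewrite mem_filter => /andP[].
apply: size_le1; first by rewrite filter_uniq // uniq_pal.
move=> x y; rewrite !mem_filter /= !mem_pal => /andP[Hx /andP[Px Ix]] /andP[Hy /andP[Py Iy]].
rewrite !mem_factors in Ix Iy.
apply: (pal_new Px Py Ix Iy).
  by apply: contra Hx => H; rewrite Px.
by apply: contra Hy => H; rewrite Py.
Qed.

Lemma pal_upper (w : word) : size (pal_factors w) <= (size w).+1.
Proof.
elim/last_ind: w => [|w a IH]; first by [].
by rewrite size_rcons; apply: leq_trans (pal_rcons w a) _.
Qed.

Definition xw : word := [:: l0; l1; l1; l0; l2; l2; l0; l1; l1; l0].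
Arguments xw : simpl never.
Fixpoint sg (u : word) : word := if u is a :: u' then a :: xw ++ sg u' else [::].
Definition T (u : word) : word := xw ++ sg u.

Lemma sg_cat u w : sg (u ++ w) = sg u ++ sg w.
Proof. by elim: u => //= a u ->. Qed.

Lemma T_cat u a w : T (u ++ a :: w) = T u ++ a :: T w.
Proof. by rewrite /T sg_cat -catA. Qed.

Lemma T_rcons u a : T (rcons u a) = T u ++ a :: xw.
Proof. by rewrite -cats1 T_cat. Qed.

Lemma T_cons a u : T (a :: u) = xw ++ a :: T u.
Proof. by []. Qed.

Lemma size_sg u : size (sg u) = 11 * size u.
Proof. elim: u => //= a u IH; rewrite IH; lia. Qed.

Lemma size_T u : size (T u) = 11 * size u + 10.
Proof. by rewrite /T size_cat size_sg addnC. Qed.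

Lemma rev_T u : rev (T u) = T (rev u).
Proof.
elim: u => [|a u IH] //.
have Rx : rev xw = xw by [].
by rewrite T_cons rev_cat (rev_cons a (T u)) IH (rev_cons a u) T_rcons Rx cat_rcons.
Qed.

Lemma sg_inj u w : sg u = sg w -> u = w.
Proof.
elim: u w => [|a u IH] [|b w] //=.
by move=> [-> /IH ->].
Qed.

Lemma T_inj u w : T u = T w -> u = w.
Proof. by move=> E; apply: sg_inj; case: (catL_inj (erefl _) E). Qed.

Lemma pal_T p : palindrome (T p) = palindrome p.
Proof.
rewrite /palindrome rev_T; apply/eqP/eqP => [/T_inj//|->//].
Qed.

Lemma infix_T p u : infix p u -> infix (T p) (T u).
Proof.
move=> /infixP[s [s' ->]].
have H1 : infix (T p) (T (p ++ s')).
  case: s' => [|c s']; first by rewrite cats0 infix_refl.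
  by rewrite T_cat prefix_infix.
case/lastP: s => [|s b]; first exact: H1.
by rewrite cat_rcons T_cat; apply: (infix_trans H1); rewrite -cat_rcons suffix_infix.
Qed.

Lemma nth_T u q r : r < 11 -> 11 * q + r < size (T u) ->
  nth l0 (T u) (11 * q + r) = if r == 10 then nth l0 u q else nth l0 xw r.
Proof.
elim: u q => [|a u IH] q Hr.
  rewrite size_T /= => H; have -> : q = 0 by lia.
  by have -> : r == 10 = false by apply/eqP; lia.
case: q => [|q].
  rewrite muln0 add0n T_cons => _; rewrite nth_cat /=.
  case: (ltnP r 10) => H.
    by have -> : r == 10 = false by apply/eqP; lia.
  by have -> : r = 10 by lia.
have Sx : size xw = 10 by [].
rewrite T_cons size_cat Sx => H.
rewrite nth_cat Sx (_ : 11 * q.+1 + r < 10 = false); last by lia.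
have -> : 11 * q.+1 + r - 10 = (11 * q + r).+1 by lia.
rewrite [nth _ (_ :: _) _]/= IH //.
move: H; rewrite size_T /= size_sg; lia.
Qed.

Lemma T22 u m : m.+1 < size (T u) -> nth l0 (T u) m = l2 -> nth l0 (T u) m.+1 = l2 -> m %% 11 = 4.
Proof.
move=> Hs H1 H2.
have Hr : m %% 11 < 11 by rewrite ltn_pmod.
have Hm := divn_eq m 11.
move: (m %/ 11) (m %% 11) Hr Hm => q r Hr Hm.
have [Hr10|Hr10] := eqVneq r 10.
  have E : m.+1 = 11 * q.+1 + 0 by lia.
  rewrite E in H2 Hs; rewrite nth_T // in H2.
have E1 : m = 11 * q + r by lia.
have E2 : m.+1 = 11 * q + r.+1 by lia.
rewrite E2 in H2 Hs; rewrite E1 in H1.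
rewrite nth_T // in H1; last by lia.
rewrite nth_T // in H2; last by lia.
rewrite (negbTE Hr10) in H1.
clear Hm E1 E2 Hs; move: Hr Hr10 H1 H2.
case: r => [|[|[|[|[|[|[|[|[|[|r]]]]]]]]]] //= _ _ H1 H2;
  try (by move: H1 => /(congr1 val)); try (by move: H2 => /(congr1 val)).
Qed.

Lemma Sx : size xw = 10. Proof. by []. Qed.

Lemma drop_sg k y : drop (11 * k) (sg y) = sg (drop k y).
Proof.
elim: y k => [|a y IH] k; first by case: k.
case: k => [|k]; first by rewrite muln0 !drop0.
have -> : 11 * k.+1 = (11 * k + 10).+1 by lia.
change (drop (11 * k + 10) (xw ++ sg y) = sg (drop k y)).
rewrite drop_cat Sx ifF; last by lia.
by rewrite addnK IH.
Qed.

Lemma align y t s : drop t (T y) = s ++ xw -> palindrome s -> 7 <= size s ->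
  exists k, t = 11 * k + 10 /\ s ++ xw = sg (drop k y).
Proof.
move=> E Ps Hn.
have Sz := congr1 size E; rewrite size_drop size_cat size_T Sx in Sz.
have key : forall m, m < size s -> nth l0 s m = nth l0 (T y) (t + m).
  by move=> m Hm; rewrite -nth_drop E nth_cat Hm.
have pal : forall m, m < size s -> nth l0 s m = nth l0 s (size s - m.+1).
  by move: Ps => /eqP Ps m Hm; rewrite -{1}Ps nth_rev.
have Y1 : 1 <= size y by slia.
have P4 : nth l0 (T y) (11 * (size y).-1 + 4) = l2.
  rewrite nth_T //; rewrite size_T; slia.
have P5 : nth l0 (T y) (11 * (size y).-1 + 5) = l2.
  rewrite nth_T //; rewrite size_T; slia.
have A5 : nth l0 (T y) (t + 5) = l2.
  rewrite -key; last by slia.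
  rewrite pal; last by slia.
  rewrite key; last by slia.
  by rewrite -P5; congr nth; slia.
have A6 : nth l0 (T y) (t + 5).+1 = l2.
  rewrite -addnS -key; last by slia.
  rewrite pal; last by slia.
  rewrite key; last by slia.
  by rewrite -P4; congr nth; slia.
have Ht : (t + 5) %% 11 = 4.
  apply: (T22 (u := y)) => //; rewrite size_T; slia.
exists (t %/ 11); split; first by lia.
have Et : t = 11 * (t %/ 11) + 10 by lia.
rewrite -E {1}Et /T drop_cat Sx ifF; last by lia.
by rewrite addnK drop_sg.
Qed.

Definition Vn i := iter i T [::].
Definition Fw (v : word) : word := v ++ l0 :: v ++ l1 :: v ++ l1 :: v ++ l0 :: v ++ l2 :: v ++ l2 ::
  v ++ l0 :: v ++ l1 :: v ++ l1 :: v ++ l0 :: v.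

Lemma Fw_step v : Fw v = step_word v ++ (v ++ l0 :: v ++ l1 :: v ++ l1 :: v ++ l0 :: v).
Proof. by rewrite /Fw /step_word; repeat (rewrite -catA /=). Qed.

Lemma T_Fw v : T (Fw v) = Fw (T v).
Proof. by rewrite /Fw !T_cat. Qed.

Lemma Fw_V i : Fw (Vn i) = Vn i.+1.
Proof.
elim: i => [|i IH]; first by [].
by rewrite /Vn iterS -/(Vn i) -T_Fw IH.
Qed.

Lemma Tstep v : T (step_word v) = step_word (T v) ++ xw.
Proof.
rewrite /step_word !T_cat; have -> : T [::] = xw by rewrite /T cats0.
by repeat (rewrite -catA /=).
Qed.

Lemma palV i : palindrome (Vn i).
Proof. by elim: i => [|i IH] //; rewrite /Vn iterS pal_T. Qed.

Lemma suffix_drop k (y : word) : suffix (drop k y) y.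
Proof. by rewrite -{2}(cat_take_drop k y) suffix_suffix. Qed.

Lemma no_long_pal i s : suffix s (step_word (Vn i)) -> palindrome s -> size s <= size (Vn i) + 2.
Proof.
elim: i s => [|i IH] s.
  rewrite /Vn /= suffixE => /eqP <-.
  move: (size _ - size s) => j.
  case: j => [|[|[|[|j]]]] //.
  by move=> _; rewrite size_drop /=; lia.
move=> Ss Ps; rewrite leqNgt; apply/negP => Hbig.
rewrite /Vn iterS -/(Vn i) in Ss Hbig.
set v := Vn i in Ss Hbig IH.
case/suffixP: Ss => r Er.
have Ed : drop (size r) (T (step_word v)) = s ++ xw by rewrite Tstep Er -catA drop_size_cat.
have H7 : 7 <= size s by move: Hbig; rewrite size_T; slia.
have [k [_ Ek]] := align Ed Ps H7.
set p := drop k (step_word v) in Ek.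
have Pp : palindrome p.
  rewrite -pal_T /T -Ek /palindrome !rev_cat.
  by move: Ps; rewrite /palindrome => /eqP ->.
have := IH p (suffix_drop _ _) Pp.
have := congr1 size Ek; rewrite size_cat size_sg Sx.
move: Hbig; rewrite size_T; slia.
Qed.

Lemma pal_prefix (w r : word) : palindrome (w ++ r) -> size r <= size w ->
  rev r = take (size r) w /\ palindrome (drop (size r) w).
Proof.
move=> /eqP P Hs.
have Ew := cat_take_drop (size r) w.
rewrite -Ew !rev_cat -!catA in P.
have [E1 E2] := catL_inj (etrans (size_takel Hs) (esym (size_rev r))) (esym P).
split; first by rewrite E1.
have [E3 _] := catL_inj (esym (size_rev _)) E2.
by rewrite /palindrome -E3.
Qed.

Lemma closure_eq v q : is_pal_closure (step_word v) q ->
  (forall s, suffix s (step_word v) -> palindrome s -> size s <= size v + 2) ->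
  palindrome (Fw v) -> q = Fw v.
Proof.
case=> Pq Pre Min Hno PF.
have Hle : size q <= size (Fw v) by apply: Min => //; rewrite Fw_step prefix_prefix.
set R := v ++ l0 :: v ++ l1 :: v ++ l1 :: v ++ l0 :: v.
have SR : size R = 5 * size v + 4 by rewrite /R; repeat (rewrite size_cat /=); slia.
have Sw : size (step_word v) = 6 * size v + 6 by rewrite /step_word; repeat (rewrite size_cat /=); slia.
case/prefixP: Pre => r Eq.
move: Hle; rewrite Fw_step -/R Eq (size_cat (step_word v) r) (size_cat (step_word v) R) SR => Hle.
have Hr : size r <= size (step_word v) by slia.
have Pq2 : palindrome (step_word v ++ r) by rewrite -Eq.
have [Er Pd] := pal_prefix Pq2 Hr.
have Hr2 : size r = size R.
  apply/eqP; rewrite eqn_leq; apply/andP; split; first by slia.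
  rewrite leqNgt; apply/negP => Hlt.
  have := Hno _ (suffix_drop _ _) Pd; rewrite size_drop; slia.
rewrite Fw_step in PF.
have HR : size R <= size (step_word v) by slia.
have [ER _] := pal_prefix PF HR.
congr (_ ++ _).
by rewrite -(revK r) -(revK R) Er ER Hr2.
Qed.



Definition trim j (s : word) : word := drop j (take (size s - j) s).

Lemma size_trim j s : size (trim j s) = size s - j - j.
Proof. by rewrite /trim size_drop size_takel // leq_subr. Qed.

Lemma nth_trim j s i : i < size s - j - j -> nth l0 (trim j s) i = nth l0 s (j + i).
Proof. by move=> H; rewrite /trim nth_drop nth_take //; lia. Qed.

Lemma pal_trim j s : palindrome s -> palindrome (trim j s).
Proof.
move=> /eqP Ps; apply/eqP; apply: (@eq_from_nth _ l0); first by rewrite size_rev.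
move=> i; rewrite size_rev size_trim => Hi.
rewrite nth_rev size_trim // !nth_trim; try lia.
rewrite -{1}Ps nth_rev; last lia.
congr nth; lia.
Qed.

Lemma infix_trim j s : infix (trim j s) s.
Proof.
apply: (@infix_trans _ (take (size s - j) s)).
  by rewrite /trim -{2}(cat_take_drop j (take _ s)) suffix_infix.
by rewrite -{3}(cat_take_drop (size s - j) s) prefix_infix.
Qed.

Lemma infix_mem (b : letter) u : infix [:: b] u -> b \in u.
Proof. by move=> /infixP[s [s' ->]]; rewrite mem_cat inE eqxx orbT. Qed.

Definition G (pj : word * nat) : word := trim pj.2 (T pj.1).
Definition Dom (u : word) : seq (word * nat) :=
  [seq (p, 0) | p <- pal_factors u] ++
  [seq (p, j) | p <- [seq p <- pal_factors u | p != [::]], j <- iota 1 10].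

Lemma memDom u p j : (p, j) \in Dom u ->
  [/\ p \in pal_factors u, j < 11 & (j == 0) || (p != [::])].
Proof.
rewrite mem_cat => /orP[/mapP[q Hq [-> ->]] | /allpairsP[[q k] [Hq Hk [-> ->]]]] //.
move: Hq Hk; rewrite mem_filter mem_iota => /andP[Hq1 Hq2] /andP[Hk1 Hk2].
split; [exact: Hq2 | exact: Hk2 | by rewrite Hq1 orbT].
Qed.

Lemma nth_T0 p m : m < 10 -> nth l0 (T p) m = nth l0 xw m.
Proof.
move=> H; have := nth_T (u := p) (q := 0) (r := m).
rewrite muln0 add0n => ->; try lia.
  by rewrite ifF //; apply/eqP; lia.
by rewrite size_T; lia.
Qed.

Lemma nth_Tend p r : r < 10 -> nth l0 (T p) (11 * size p + r) = nth l0 xw r.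
Proof.
move=> H; rewrite nth_T; try lia.
  by rewrite ifF //; apply/eqP; lia.
by rewrite size_T; lia.
Qed.

Lemma G_inj u : {in Dom u &, injective G}.
Proof.
move=> [p j] [p' j'] /memDom[Pp Hj Hc] /memDom[Pp' Hj' Hc'] E.
have Hs := congr1 size E; rewrite /G /= !size_trim !size_T in Hs.
have A : j = 0 \/ 0 < size p by case/orP: Hc => [/eqP|]; [left | rewrite lt0n size_eq0; right].
have A' : j' = 0 \/ 0 < size p' by case/orP: Hc' => [/eqP|]; [left | rewrite lt0n size_eq0; right].
have [Ej Esz] : j = j' /\ size p = size p' by slia.
subst j'; congr pair; apply: T_inj; apply: (@eq_from_nth _ l0); first by rewrite !size_T Esz.
move=> m; rewrite size_T => Hm.
case: (ltnP m j) => H1; first by rewrite !nth_T0 //; lia.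
case: (ltnP m (11 * size p + 10 - j)) => H2.
  have := congr1 (nth l0 ^~ (m - j)) E; rewrite /G /= !nth_trim; try (rewrite size_T; slia).
  by rewrite subnKC.
have -> : m = 11 * size p + (m - 11 * size p) by slia.
rewrite nth_Tend; last by slia.
by rewrite {2}Esz nth_Tend //; slia.
Qed.

Definition Sm (u : word) : seq word :=
  [:: [::]; [:: l1; l1]; [:: l2; l2]; [:: l0; l1; l1; l0]; [:: l0; l2; l2; l0];
      [:: l1; l0; l2; l2; l0; l1]; [:: l1; l1; l0; l2; l2; l0; l1; l1];
      if l0 \in u then [:: l0; l0] else [:: l0];
      if l1 \in u then [:: l1; l0; l1] else [:: l1];
      if l2 \in u then [:: l2; l0; l1; l1; l0; l2] else [:: l2]].

Lemma Sm_size u e : e \in Sm u -> size e <= 8.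
Proof.
have : all (fun e : word => size e <= 8) (Sm u).
  by rewrite /Sm; case: ifP; case: ifP; case: ifP.
by move/allP; apply.
Qed.

Lemma Sm_uniq u : uniq (Sm u).
Proof. by rewrite /Sm; case: ifP; case: ifP; case: ifP. Qed.

Lemma letter3 (b : letter) : [\/ b = l0, b = l1 | b = l2].
Proof.
case: b => [[|[|[|//]]] H].
- by constructor 1; apply: val_inj.
- by constructor 2; apply: val_inj.
- by constructor 3; apply: val_inj.
Qed.

Lemma Sm_notG u p j : (p, j) \in Dom u -> G (p, j) \notin Sm u.
Proof.
move=> /memDom[Pp Hj Hc]; apply/negP => HS.
have Hs := Sm_size HS; rewrite /G /= size_trim size_T in Hs.
case: p Pp Hc HS Hs => [|b [|c p]] Pp Hc HS Hs.
- by move: Hc; rewrite orbF => /eqP Ej; rewrite Ej in Hs.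
- have Hb : b \in u by apply: infix_mem; move: Pp; rewrite mem_pal => /andP[].
  move: HS; rewrite /G /=.
  case: (letter3 b) => -> in Hb *; rewrite /Sm Hb;
  case: (_ \in u); case: (_ \in u);
  case: j Hj {Hc Hs} => [|[|[|[|[|[|[|[|[|[|[|j]]]]]]]]]]] //.
- by move: Hs; rewrite /=; slia.
Qed.

Lemma mem_infix (a : letter) u : a \in u -> infix [:: a] u.
Proof. by case/splitPr => s1 s2; apply/infixP; exists s1, s2. Qed.

Lemma Sm_pal u e : e \in Sm u -> e \in pal_factors (T u).
Proof.
have K : all (fun e => palindrome e && (infix e xw ||
           has (fun a => infix e (T [:: a]) && (a \in u)) [:: l0; l1; l2])) (Sm u).
  by rewrite /Sm; case: ifP => H0; case: ifP => H1; case: ifP => H2; rewrite /= ?H0 ?H1 ?H2.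
move/allP: K => K /K /andP[Pe He]; rewrite mem_pal Pe andTb.
case/orP: He => [He|/hasP[a _ /andP[Ha Hu]]].
  by apply: (infix_trans He); rewrite /T prefix_infix.
by apply: (infix_trans Ha); apply: infix_T; apply: mem_infix.
Qed.

Lemma G_pal u pj : pj \in Dom u -> G pj \in pal_factors (T u).
Proof.
case: pj => p j /memDom[Pp _ _]; move: Pp; rewrite !mem_pal => /andP[Pp Ip].
rewrite /G /= pal_trim ?pal_T //=.
exact: infix_trans (infix_trim _ _) (infix_T Ip).
Qed.

Lemma size_Dom u : rich u -> size (Dom u) = 11 * size u + 1.
Proof.
move=> /eqP R.
have Hn : [::] \in pal_factors u by rewrite mem_pal infix0s.
have C1 := count_uniq_mem [::] (uniq_pal u); rewrite Hn in C1.
have C2 := count_predC (pred1 [::]) (pal_factors u).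
rewrite /Dom size_cat size_map size_allpairs size_iota size_filter.
have -> : count (fun p : word => p != [::]) (pal_factors u) = size u.
  by move: C2; rewrite R C1 /= add1n => [[]].
rewrite R; lia.
Qed.

Lemma rich_T u : rich u -> rich (T u).
Proof.
move=> Ru; rewrite /rich eqn_leq pal_upper andTb.
set L := map G (Dom u) ++ Sm u.
have UL : uniq L.
  rewrite cat_uniq Sm_uniq andbT; apply/andP; split.
    rewrite map_inj_in_uniq; last exact: G_inj.
    rewrite cat_uniq map_inj_uniq; last by move=> x y [].
    rewrite uniq_pal andTb; apply/andP; split.
      apply/hasPn => [[p j]] /allpairsP[[q k] [_ Hk [-> ->]]].
      apply/mapP => [[r _ [_ Ek]]]; move: Hk; rewrite /= Ek.
      by [].
    apply: allpairs_uniq; [by rewrite filter_uniq // uniq_pal | exact: iota_uniq |].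
    by move=> [a b] [c d] _ _ /=.
  apply/hasPn => e He; apply/negP => /mapP[[p j] Hpj Ee].
  by move: (Sm_notG Hpj); rewrite -Ee He.
have SL : size L = (size (T u)).+1.
  by rewrite size_cat size_map size_Dom // size_T /Sm /=; lia.
rewrite -SL; apply: uniq_leq_size => // e; rewrite mem_cat => /orP[/mapP[pj Hpj ->]|].
  exact: G_pal.
exact: Sm_pal.
Qed.
Theorem lemma5p7 (v : nat -> word) :
  v 0 = [::] ->
  (forall i, is_pal_closure (step_word (v i)) (v i.+1)) ->
  forall i, rich (v i).
Proof.
move=> H0 H.
have HV : forall i, v i = Vn i.
  elim=> [|i IH] //.
  rewrite -Fw_V; apply: closure_eq; rewrite -IH //.
    by rewrite IH; apply: no_long_pal.
  by rewrite IH Fw_V palV.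
move=> i; rewrite HV; elim: i => [|i IH]; first by [].
by rewrite /Vn iterS rich_T.
Qed.
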